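(* Let $P$ be a treetope with base $B$, and let $F$ be a nonempty face of $B$. Then there is exactly one face $F'$ of $P$ such that $F'\ne F$ and $F'\cap B=F$.
   Context: A polytope is the convex hull of a finite set of points in a Euclidean space; faces, vertices, edges, facets and the graph (1-skeleton) are as usual. A \emph{treetope} is a polytope $P$ together with a distinguished facet $B$ (the \emph{base}) such that every face $F$ of $P$ whose intersection $F\cap B$ consists of at most one point has dimension at most one. The face $F'$ in the statement is called the \emph{lift} of $F$. *)

(* Defs.v *)
From HB Require Import structures.
From mathcomp Require Import all_boot all_order all_algebra.
Set Implicit Arguments. Unset Strict Implicit. Unset Printing Implicit Defensive.
Import Order.TTheory GRing.Theory Num.Theory.
Local Open Scope ring_scope.

Section Polytopes.
Variables (R : realFieldType) (n : nat).
Notation vec := 'rV[R]_n.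

Definition pset := vec -> Prop.

Definition seteq (S T : pset) : Prop := forall x, S x <-> T x.

Definition psetI (S T : pset) : pset := fun x => S x /\ T x.

Definition dotv (a x : vec) : R := \sum_(i < n) a 0 i * x 0 i.

Definition conv (V : seq vec) : pset :=
  fun x => exists lam : 'I_(size V) -> R,
    (forall i, 0 <= lam i) /\ \sum_i lam i = 1 /\
    x = \sum_i lam i *: V`_i.

(* a face of S: intersection of S with the boundary hyperplane of a valid
   linear inequality (a = 0, b = 0 gives S itself; the empty face is allowed) *)
Definition is_face (S F : pset) : Prop :=
  exists (a : vec) (b : R),
    (forall x, S x -> dotv a x <= b) /\
    seteq F (fun x => S x /\ dotv a x = b).

(* matrix of differences x_i - x_0 of a finite list of points; its rank is the
   dimension of the affine hull of the list *)
Definition diffmx (s : seq vec) : 'M[R]_(size s, n) :=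
  \matrix_(i < size s) (s`_i - s`_0).

Definition in_set (S : pset) (s : seq vec) : Prop := forall x, x \in s -> S x.

(* affine dimension of S is at most k (vacuous for the empty set, dim -1) *)
Definition dim_le (S : pset) (k : nat) : Prop :=
  forall s, in_set S s -> (\rank (diffmx s) <= k)%N.

Definition has_dim (S : pset) (k : nat) : Prop :=
  (exists x, S x) /\ dim_le S k /\
  exists s, in_set S s /\ \rank (diffmx s) = k.

Definition is_facet (S B : pset) : Prop :=
  is_face S B /\ exists k, has_dim S k.+1 /\ has_dim B k.

Definition at_most_one_point (S : pset) : Prop :=
  forall x y, S x -> S y -> x = y.

Definition treetope (P B : pset) : Prop :=
  is_facet P B /\
  forall F, is_face P F -> at_most_one_point (psetI F B) -> dim_le F 1.

End Polytopes.

(* Main.v *)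
Require Import Defs.
From HB Require Import structures.
From mathcomp Require Import all_boot all_order all_algebra.
From mathcomp Require Import ring lra.
Import Order.TTheory GRing.Theory Num.Theory.
Local Open Scope ring_scope.

Set Implicit Arguments. Unset Strict Implicit. Unset Printing Implicit Defensive.

Section S.
Variables (R : realFieldType) (n : nat).
Implicit Types (a x y : 'rV[R]_n).

Lemma dotvDr a x y : dotv a (x + y) = dotv a x + dotv a y.
Proof. rewrite /dotv -big_split /=; apply: eq_bigr => i _; by rewrite mxE mulrDr. Qed.
Lemma dotvZr a k x : dotv a (k *: x) = k * dotv a x.
Proof. rewrite /dotv mulr_sumr; apply: eq_bigr => i _; by rewrite mxE mulrCA. Qed.
Lemma dotvNr a x : dotv a (- x) = - dotv a x.
Proof. by rewrite -scaleN1r dotvZr mulN1r. Qed.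
Lemma dotvBr a x y : dotv a (x - y) = dotv a x - dotv a y.
Proof. by rewrite dotvDr dotvNr. Qed.
Lemma dotvC a x : dotv a x = dotv x a.
Proof. rewrite /dotv; apply: eq_bigr => i _; by rewrite mulrC. Qed.
Lemma dotvDl a b x : dotv (a + b) x = dotv a x + dotv b x.
Proof. by rewrite dotvC dotvDr -!(dotvC x). Qed.
Lemma dotvZl k a x : dotv (k *: a) x = k * dotv a x.
Proof. by rewrite dotvC dotvZr dotvC. Qed.
Lemma dotv0r a : dotv a 0 = 0.
Proof. by rewrite -(scale0r 0) dotvZr mul0r. Qed.
Lemma dotv_sumr (I : finType) a (l : I -> R) (v : I -> 'rV[R]_n) :
  dotv a (\sum_i l i *: v i) = \sum_i l i * dotv a (v i).
Proof.
elim/big_rec2: _ => [|i s1 s2 _ <-]; first by rewrite dotv0r.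
by rewrite dotvDr dotvZr.
Qed.
Lemma dotv_ge0 x : 0 <= dotv x x.
Proof. rewrite /dotv; apply: sumr_ge0 => i _; by rewrite -expr2 sqr_ge0. Qed.
Lemma dotv_eq0 x : dotv x x = 0 -> x = 0.
Proof.
move=> /eqP; rewrite /dotv psumr_eq0; last by move=> i _; by rewrite -expr2 sqr_ge0.
move=> /allP H; apply/rowP => j; rewrite mxE.
have := H j (mem_index_enum j); rewrite /= mulf_eq0 orbb => /eqP -> //.
Qed.
End S.
Lemma dotvNl (R : realFieldType) (n : nat) (a x : 'rV[R]_n) : dotv (- a) x = - dotv a x.
Proof. by rewrite -scaleN1r dotvZl mulN1r. Qed.
Lemma norm_le (R : realFieldType) (n : nat) (w x : 'rV[R]_n) :
  dotv x x <= dotv w w -> dotv w (x - w) <= 0.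
Proof.
move=> H; have H2 := dotv_ge0 (x - w).
rewrite !dotvBr !(dotvC (x - w)) !dotvBr (dotvC x w) in H2.
rewrite dotvBr; lra.
Qed.
Lemma norm_lt (R : realFieldType) (n : nat) (w x : 'rV[R]_n) :
  dotv x x <= dotv w w -> dotv w (x - w) = 0 -> x = w.
Proof.
move=> H e; apply/eqP; rewrite -subr_eq0; apply/eqP; apply: dotv_eq0.
have H2 := dotv_ge0 (x - w).
rewrite !dotvBr !(dotvC (x - w)) !dotvBr (dotvC x w) in H2.
move: e; rewrite dotvBr => e.
rewrite !dotvBr !(dotvC (x - w)) !dotvBr (dotvC x w); lra.
Qed.


Lemma comb_eq0 (R : realFieldType) (I : finType) (l e : I -> R) :
  (forall i, 0 <= l i) -> (forall i, 0 < l i -> e i <= 0) ->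
  (\sum_i l i * e i = 0 <-> forall i, 0 < l i -> e i = 0).
Proof.
move=> l0 e0; have t0 i : 0 <= - (l i * e i).
  have := l0 i; rewrite le_eqVlt => /orP [/eqP <-|li]; first by rewrite mul0r oppr0.
  by rewrite -mulrN mulr_ge0 // oppr_ge0 e0.
split.
- move=> /eqP; rewrite -oppr_eq0 -sumrN psumr_eq0; last by move=> i _.
  move=> /allP H i li; have := H i (mem_index_enum i); rewrite /= oppr_eq0 mulf_eq0.
  by case/orP => /eqP // l0'; move: li; rewrite l0' ltxx.
- move=> H; apply: big1 => i _; have := l0 i; rewrite le_eqVlt => /orP [/eqP <-|/H ->];
  by rewrite ?mul0r ?mulr0.
Qed.

Lemma comb_le0 (R : realFieldType) (I : finType) (l e : I -> R) :
  (forall i, 0 <= l i) -> (forall i, e i <= 0) -> \sum_i l i * e i <= 0.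
Proof.
move=> l0 e0; rewrite -oppr_ge0 -sumrN; apply: sumr_ge0 => i _.
by rewrite -mulrN mulr_ge0 // oppr_ge0.
Qed.

Section Conv.
Variables (R : realFieldType) (n : nat) (V : seq 'rV[R]_n).
Notation N := (size V).
Notation pt i := (V`_(nat_of_ord i)).

Lemma conv_pt (i : 'I_N) : conv V (pt i).
Proof.
exists (fun j => (j == i)%:R); split; first by move=> j; rewrite ler0n.
split; first by rewrite (bigD1 i) //= eqxx big1 ?addr0 // => j /negbTE ->.
rewrite (bigD1 i) //= eqxx scale1r big1 ?addr0 // => j /negbTE ->; by rewrite scale0r.
Qed.

Lemma dotv_comb k (lam : 'I_N -> R) (h : R) :
  \sum_i lam i = 1 ->
  dotv k (\sum_i lam i *: pt i) - h = \sum_i lam i * (dotv k (pt i) - h).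
Proof.
move=> s1; rewrite dotv_sumr.
under [RHS]eq_bigr do rewrite mulrBr.
by rewrite sumrB -mulr_suml s1 mul1r.
Qed.

Lemma conv_le k h x : (forall i : 'I_N, dotv k (pt i) <= h) -> conv V x -> dotv k x <= h.
Proof.
move=> H [lam [l0 [s1 ->]]]; rewrite -subr_le0 dotv_comb //.
by apply: comb_le0 => // i; rewrite subr_le0.
Qed.

Lemma conv_eq k h (lam : 'I_N -> R) :
  (forall i, 0 <= lam i) -> \sum_i lam i = 1 ->
  (forall i : 'I_N, 0 < lam i -> dotv k (pt i) <= h) ->
  (dotv k (\sum_i lam i *: pt i) = h <-> forall i, 0 < lam i -> dotv k (pt i) = h).
Proof.
move=> l0 s1 H; split.
- move=> /eqP; rewrite -subr_eq0 dotv_comb // => /eqP /comb_eq0 H2 i li.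
  apply/eqP; rewrite -subr_eq0; apply/eqP; apply: H2 => // j lj; by rewrite subr_le0 H.
- move=> H2; apply/eqP; rewrite -subr_eq0 dotv_comb //; apply/eqP.
  apply/comb_eq0 => //; first by move=> j lj; rewrite subr_le0 H.
  by move=> i /H2 ->; rewrite subrr.
Qed.

Definition hface k h : pset R n := fun x => conv V x /\ dotv k x = h.

Lemma hface_face k h : (forall i : 'I_N, dotv k (pt i) <= h) -> is_face (conv V) (hface k h).
Proof. move=> H; exists k, h; split; [by move=> x; exact: conv_le | by []]. Qed.

Lemma face_hface S : is_face (conv V) S -> exists k h,
  (forall i : 'I_N, dotv k (pt i) <= h) /\ seteq S (hface k h).
Proof.
move=> [k [h [H1 H2]]]; exists k, h; split; last by [].
move=> i; apply: H1; exact: conv_pt.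
Qed.

Lemma comb_all (lam : 'I_N -> R) (x : 'rV[R]_n) :
  (forall i, 0 <= lam i) -> \sum_i lam i = 1 ->
  (forall i, 0 < lam i -> pt i = x) -> \sum_i lam i *: pt i = x.
Proof.
move=> l0 s1 H; transitivity (\sum_i lam i *: x).
  apply: eq_bigr => i _; have := l0 i; rewrite le_eqVlt => /orP [/eqP <-|/H -> //].
  by rewrite !scale0r.
by rewrite -scaler_suml s1 scale1r.
Qed.

Lemma sum1_pos (lam : 'I_N -> R) : (forall i, 0 <= lam i) -> \sum_i lam i = 1 ->
  exists i, 0 < lam i.
Proof.
move=> l0 s1; case: (pickP (fun i => 0 < lam i)) => [i Hi|H]; first by exists i.
have : \sum_i lam i = 0 by apply: big1 => i _; apply/eqP; rewrite eq_le l0 andbT leNgt H.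
by rewrite s1 => /eqP; rewrite oner_eq0.
Qed.
End Conv.


Lemma ex_max (R : realFieldType) (T : finType) (P : pred T) (f : T -> R) :
  (exists x, P x) -> exists x, P x /\ forall y, P y -> f y <= f x.
Proof.
move=> [x0 Px0].
case: (@arg_maxP _ _ T x0 P f Px0) => x Px Hx.
by exists x.
Qed.

Lemma ex_min (R : realFieldType) (T : finType) (P : pred T) (f : T -> R) :
  (exists x, P x) -> exists x, P x /\ forall y, P y -> f x <= f y.
Proof.
move=> H; have [x [Px Hx]] := ex_max (fun x => - f x) H.
by exists x; split => // y /Hx; rewrite lerN2.
Qed.

Lemma ex_N (R : realFieldType) (T : finType) (P : pred T) (p q : T -> R) :
  (forall i, P i -> 0 < q i) -> exists N, forall i, P i -> p i - N * q i < 0.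
Proof.
move=> Hq; exists (1 + \sum_(i | P i) `|p i| / q i) => i Pi.
have qi := Hq i Pi.
have H1 : `|p i| / q i <= \sum_(j | P j) `|p j| / q j.
  rewrite (bigD1 i) //= lerDl; apply: sumr_ge0 => j /andP [Pj _].
  by rewrite divr_ge0 // ltW // Hq.
rewrite subr_lt0; apply: (@lt_le_trans _ _ ((1 + `|p i| / q i) * q i)).
  rewrite mulrDl mul1r mulfVK ?gt_eqF //.
  apply: (@le_lt_trans _ _ (`|p i|)); first exact: ler_norm.
  by rewrite ltrDr.
by rewrite ler_pM2r // lerD2l.
Qed.

Lemma breakpoint (R : realFieldType) (T : finType) (P : pred T) (p q : T -> R) (i0 : T) :
  P i0 -> (forall i, P i -> p i <= p i0) -> (exists j, P j /\ q i0 < q j) ->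
  exists tau j, [/\ 0 <= tau, P j, q i0 < q j,
    (forall i, P i -> p i + tau * q i <= p i0 + tau * q i0) &
    p j + tau * q j = p i0 + tau * q i0].
Proof.
move=> Pi0 Hp [j0 [Pj0 Hj0]].
pose K := fun i => P i && (q i0 < q i).
pose cr := fun i => (p i0 - p i) / (q i - q i0).
have [j [/andP [Pj Kj] Hj]] := @ex_min R T K cr (ex_intro _ j0 (introT andP (conj Pj0 Hj0))).
have qj : 0 < q j - q i0 by rewrite subr_gt0.
exists (cr j), j; split => //.
- by rewrite /cr divr_ge0 ?subr_ge0 ?Hp // ltW.
- move=> i Pi; case: (ltP (q i0) (q i)) => Hi.
  + have qi : 0 < q i - q i0 by rewrite subr_gt0.
    have := Hj i (introT andP (conj Pi Hi)); rewrite {2}/cr ler_pdivlMr // => H.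
    rewrite mulrBr in H; lra.
  + have tau0 : 0 <= cr j by rewrite /cr divr_ge0 ?subr_ge0 ?Hp // ltW.
    by rewrite lerD ?Hp // ler_wpM2l.
- have : cr j * (q j - q i0) = p i0 - p j by rewrite /cr divfK // gt_eqF.
  rewrite mulrBr => H; lra.
Qed.


Lemma collinear (R : realFieldType) (n : nat) (w v v' : 'rV[R]_n) :
  (\rank (Defs.diffmx [:: w; v; v']) <= 1)%N -> v - w != 0 ->
  exists k, v' - w = k *: (v - w).
Proof.
move=> Hr nz.
set D := Defs.diffmx _ in Hr *.
have r1 : row (1 : 'I_3) D = v - w by rewrite /D /Defs.diffmx rowK.
have r2 : row (2 : 'I_3) D = v' - w by rewrite /D /Defs.diffmx rowK.
have s1 : (v - w <= D)%MS by rewrite -r1 row_sub.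
have s2 : (v' - w <= D)%MS by rewrite -r2 row_sub.
have rk : \rank (v - w) = 1%N by rewrite rank_rV nz.
have sD : (D <= v - w)%MS.
  have := mxrank_leqif_sup s1; rewrite rk => /leqifP.
  case: ifP => // _ H; move: Hr; by rewrite leqNgt H.
have /submxP [X ->] := submx_trans s2 sD.
exists (X 0 0); by rewrite {1}[X]mx11_scalar mul_scalar_mx.
Qed.


Section Main.
Variables (R : realFieldType) (n : nat) (V : seq 'rV[R]_n).
Notation N := (size V).
Notation pt i := (V`_(nat_of_ord i)).
Variables (c a : 'rV[R]_n) (d b : R).
Hypothesis Hc : forall i : 'I_N, dotv c (pt i) <= d.

Definition rat (al : 'rV[R]_n) (be : R) (i : 'I_N) := (dotv al (pt i) - be) / (d - dotv c (pt i)).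

Lemma tilt (g : 'rV[R]_n) h (al : 'rV[R]_n) be m :
  (forall i : 'I_N, dotv g (pt i) <= h) ->
  (forall i : 'I_N, dotv c (pt i) = d -> dotv g (pt i) = h -> dotv al (pt i) <= be) ->
  (forall i : 'I_N, dotv c (pt i) < d -> dotv g (pt i) = h -> rat al be i <= m) ->
  exists k h', (forall i : 'I_N, dotv k (pt i) <= h') /\
   forall i : 'I_N, (dotv k (pt i) = h' <->
     (dotv c (pt i) = d /\ dotv g (pt i) = h /\ dotv al (pt i) = be) \/
     (dotv c (pt i) < d /\ dotv g (pt i) = h /\ rat al be i = m)).
Proof.
move=> Hg H1 H2.
have [M HM] := @ex_N R _ (fun i : 'I_N => dotv g (pt i) < h)
  (fun i => dotv al (pt i) - be + m * (dotv c (pt i) - d))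
  (fun i => h - dotv g (pt i)) (fun i Hi => ltac:(by rewrite subr_gt0)).
exists (al + m *: c + M *: g), (be + m * d + M * h).
have E i : dotv (al + m *: c + M *: g) (pt i) - (be + m * d + M * h) =
   dotv al (pt i) - be + m * (dotv c (pt i) - d) - M * (h - dotv g (pt i)).
  rewrite !dotvDl !dotvZl; ring.
suff K i : (dotv (al + m *: c + M *: g) (pt i) - (be + m * d + M * h) <= 0) /\
   (dotv (al + m *: c + M *: g) (pt i) - (be + m * d + M * h) = 0 <->
     (dotv c (pt i) = d /\ dotv g (pt i) = h /\ dotv al (pt i) = be) \/
     (dotv c (pt i) < d /\ dotv g (pt i) = h /\ rat al be i = m)).
  split => i; first by rewrite -subr_le0; case: (K i).
  case: (K i) => _ <-; split; [by move=> ->; rewrite subrr | by move/eqP; rewrite subr_eq0 => /eqP].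
rewrite E.
have [gl|ge] := ltP (dotv g (pt i)) h.
  have := HM i gl => lt; split; first exact: ltW.
  split; first by move=> e; move: lt; rewrite e ltxx.
  by case=> [[_ [e _]]|[_ [e _]]]; move: gl; rewrite e ltxx.
have eg : dotv g (pt i) = h by apply/eqP; rewrite eq_le Hg ge.
rewrite eg subrr mulr0 subr0.
have := Hc i; rewrite le_eqVlt => /orP [/eqP ec|lc].
  rewrite ec subrr mulr0 addr0 subr_le0 H1 //; split => //; split.
    by move/eqP; rewrite subr_eq0 => /eqP e; left.
  case=> [[_ [_ ->]]|[lc _]]; first by rewrite subrr.
  by move: lc; rewrite ltxx.
have dp : 0 < d - dotv c (pt i) by rewrite subr_gt0.
have Hr := H2 i lc eg; rewrite /rat ler_pdivrMr // in Hr.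
split; first by lra.
split.
  move=> e; right; split => //; split => //; rewrite /rat.
  rewrite -[m](mulfK (lt0r_neq0 dp)); congr (_ / _); lra.
case=> [[ec _]|[_ [_ e]]]; first by move: lc; rewrite ec ltxx.
have e' : dotv al (pt i) - be = m * (d - dotv c (pt i)) by rewrite -e /rat divfK ?gt_eqF.
lra.
Qed.

Hypothesis Ha : forall i : 'I_N, dotv c (pt i) = d -> dotv a (pt i) <= b.
Hypothesis HF' : exists i : 'I_N, (dotv c (pt i) == d) && (dotv a (pt i) == b).
Definition B0 := hface V c d.
Definition F0 : pset R n := fun x => B0 x /\ dotv a x = b.
Definition LF k h := [/\ (forall i : 'I_N, dotv k (pt i) <= h),
  (forall i : 'I_N, dotv c (pt i) = d -> (dotv k (pt i) = h <-> dotv a (pt i) = b)) &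
  exists i : 'I_N, dotv c (pt i) < d /\ dotv k (pt i) = h].

Lemma LF_face k h : LF k h -> is_face (conv V) (hface V k h).
Proof. by case=> H _ _; apply: hface_face. Qed.

Lemma LF_meet k h : LF k h -> seteq (psetI (hface V k h) B0) F0.
Proof.
case=> Hk HB _ x; split.
- case=> [[cx kx] [_ dx]]; split; first by [].
  case: cx => lam [l0 [s1 ex]]; rewrite ex in kx dx *.
  have Hcd := iffLR (conv_eq l0 s1 (fun i _ => Hc i)) dx.
  have Hkd := iffLR (conv_eq l0 s1 (fun i _ => Hk i)) kx.
  apply/(conv_eq l0 s1) => i li; last by apply/(HB i (Hcd i li)); apply: Hkd.
  by apply: Ha; apply: Hcd.
- case=> [[cx dx] ax]; split; last by [].
  split; first by [].
  case: cx => lam [l0 [s1 ex]]; rewrite ex in dx ax *.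
  have Hcd := iffLR (conv_eq l0 s1 (fun i _ => Hc i)) dx.
  have Had := iffLR (conv_eq l0 s1 (fun i li => Ha (Hcd i li))) ax.
  apply/(conv_eq l0 s1 (fun i _ => Hk i)) => i li.
  by apply/(HB i (Hcd i li)); apply: Had.
Qed.

Lemma LF_neq k h : LF k h -> ~ seteq (hface V k h) F0.
Proof.
case=> _ _ [i [ci ki]] E.
have [[_ ci'] _] : F0 (pt i) by apply/E; split; [exact: conv_pt | exact: ki].
by move: ci; rewrite ci' ltxx.
Qed.

Lemma face_LF S : is_face (conv V) S -> seteq (psetI S B0) F0 -> ~ seteq S F0 ->
  exists k h, LF k h /\ seteq S (hface V k h).
Proof.
move=> /face_hface [k [h [Hk ES]]] EB NE; exists k, h; split => //.
have Bpt (i : 'I_N) : dotv c (pt i) = d -> B0 (pt i) by move=> ci; split; [exact: conv_pt|].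
split => //.
- move=> i ci; split.
  + move=> ki; have [_ ->] : F0 (pt i) by apply/EB; split; [apply/ES; split => //; exact: conv_pt | exact: Bpt].
    by [].
  + move=> ai; have [/ES [_ ->] _] : psetI S B0 (pt i) by apply/EB; split; [exact: Bpt|].
    by [].
- case: (pickP (fun i : 'I_N => (dotv c (pt i) < d) && (dotv k (pt i) == h))) => [i /andP [ci /eqP ki]|H].
    by exists i.
  exfalso; apply: NE => x; split.
  + move=> /ES [cx kx]; apply/EB; split; first by apply/ES.
    split; first by [].
    case: cx => lam [l0 [s1 ex]]; rewrite ex in kx *.
    have Hk' := iffLR (conv_eq l0 s1 (fun i _ => Hk i)) kx.
    apply/(conv_eq l0 s1 (fun i _ => Hc i)) => i li.
    have := Hc i; rewrite le_eqVlt => /orP [/eqP //|ci].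
    by move: (H i); rewrite ci /= Hk' // eqxx.
  + by move=> /EB [].
Qed.

Hypothesis Htree : forall T, is_face (conv V) T -> at_most_one_point (psetI T B0) -> dim_le T 1.

Definition Rq (W al : 'rV[R]_n) (i : 'I_N) := dotv al (pt i - W) / (d - dotv c (pt i)).

Lemma Rq_lin W al1 al2 t i : Rq W (al1 + t *: al2) i = Rq W al1 i + t * Rq W al2 i.
Proof. by rewrite /Rq dotvDl dotvZl mulrDl mulrA. Qed.
Lemma Rq_opp W al i : Rq W (- al) i = - Rq W al i.
Proof. by rewrite /Rq dotvNl mulNr. Qed.
Lemma rat_Rq W al i : rat al (dotv al W) i = Rq W al i.
Proof. by rewrite /rat /Rq dotvBr. Qed.

Lemma Kp g h : LF g h -> forall u1 u2 : 'I_N,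
  dotv c (pt u1) < d -> dotv g (pt u1) = h ->
  dotv c (pt u2) < d -> dotv g (pt u2) = h ->
  forall al be, (forall i : 'I_N, dotv c (pt i) = d -> dotv a (pt i) = b -> dotv al (pt i) = be) ->
  rat al be u1 = rat al be u2.
Proof.
move=> LFg u1 u2 cu1 gu1 cu2 gu2 al be Hal.
have [Hg HgB _] := LFg.
have [w [/andP [/eqP cw /eqP aw] Hw]] := @ex_max R _
  (fun i : 'I_N => (dotv c (pt i) == d) && (dotv a (pt i) == b)) (fun i => dotv (pt i) (pt i)) HF'.
set W := pt w.
pose J := fun i : 'I_N => (dotv c (pt i) < d) && (dotv g (pt i) == h).
have Ju1 : J u1 by rewrite /J cu1 gu1 eqxx.
have Ju2 : J u2 by rewrite /J cu2 gu2 eqxx.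
have [i0 [Ji0 Hi0]] := @ex_max R _ J (Rq W W) (ex_intro _ u1 Ju1).
have key : forall al', (forall i : 'I_N, dotv c (pt i) = d -> dotv a (pt i) = b -> dotv al' (pt i - W) = 0) ->
    forall j, J j -> Rq W al' j <= Rq W al' i0.
  move=> al' Hal' j Jj; rewrite leNgt; apply/negP => lt.
  have [tau [j' [tau0 Jj' qj' Hmax Heq]]] := breakpoint Ji0 Hi0 (ex_intro _ j (conj Jj lt)).
  pose al2 := W + tau *: al'.
  have Hinf : forall i : 'I_N, dotv c (pt i) = d -> dotv g (pt i) = h ->
      dotv al2 (pt i - W) = dotv W (pt i - W) /\ dotv (pt i) (pt i) <= dotv W W.
    move=> i ci gi; have ai : dotv a (pt i) = b by apply/(HgB i ci).
    rewrite /al2 dotvDl dotvZl Hal' // mulr0 addr0; split => //.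
    by apply: Hw; rewrite ci ai !eqxx.
  have [k [h' [Hk Hspec]]] := @tilt g h al2 (dotv al2 W) (Rq W W i0 + tau * Rq W al' i0) Hg
    (fun i ci gi => ltac:(rewrite -subr_le0 -dotvBr; have [-> ?] := Hinf i ci gi; exact: norm_le))
    (fun i ci gi => ltac:(rewrite rat_Rq /al2 Rq_lin; apply: Hmax; by rewrite /J ci gi eqxx)).
  set T := hface V k h'.
  have onlyW : forall x, psetI T B0 x -> x = W.
    move=> x [[cx kx] [_ dx]]; case: cx => lam [l0 [s1 ex]]; rewrite ex in kx dx *.
    have Hcd := iffLR (conv_eq l0 s1 (fun i _ => Hc i)) dx.
    have Hkd := iffLR (conv_eq l0 s1 (fun i _ => Hk i)) kx.
    apply: comb_all => // i li; have := iffLR (Hspec i) (Hkd i li).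
    case=> [[ci [gi ali]]|[ci _]]; last by move: ci; rewrite Hcd // ltxx.
    have [e1 e2] := Hinf i ci gi.
    apply: norm_lt => //; rewrite -e1 dotvBr ali subrr //.
  have := Htree (hface_face Hk) (fun x y Hx Hy => ltac:(by rewrite (onlyW x Hx) (onlyW y Hy))).
  move=> /(_ [:: W; pt i0; pt j']) Hr.
  have Tw : T W.
    split; first exact: conv_pt.
    apply/Hspec; left; split => //; split => //; apply/(HgB w cw) => //.
  have Ti0 : T (pt i0).
    split; first exact: conv_pt.
    move: Ji0 => /andP [ci /eqP gi].
    apply/Hspec; right; split => //; split => //; by rewrite rat_Rq /al2 Rq_lin.
  have Tj' : T (pt j').
    split; first exact: conv_pt.
    move: Jj' => /andP [ci /eqP gi].
    apply/Hspec; right; split => //; split => //; by rewrite rat_Rq /al2 Rq_lin.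
  have Hr' : (\rank (Defs.diffmx [:: W; pt i0; pt j']) <= 1)%N.
    apply: Hr => x; rewrite !inE => /orP [/eqP ->|/orP [/eqP ->|/eqP ->]] //.
  move: Ji0 Jj' => /andP [ci0 _] /andP [cj' _].
  have nz : pt i0 - W != 0.
    apply/negP => /eqP e; have e' : pt i0 = W by apply/eqP; rewrite -subr_eq0 e.
    by move: ci0; rewrite e' /W cw ltxx.
  have [kap ek] := collinear Hr' nz.
  have ek' : pt j' = W + kap *: (pt i0 - W) by rewrite -ek addrC subrK.
  have kap0 : kap != 0.
    apply/negP => /eqP k0; by move: cj'; rewrite ek' k0 scale0r addr0 /W cw ltxx.
  have : Rq W al' j' = Rq W al' i0.
    rewrite /Rq ek.
    have -> : d - dotv c (pt j') = kap * (d - dotv c (pt i0)).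
      rewrite ek' dotvDr dotvZr dotvBr /W cw; ring.
    by rewrite dotvZr -mulf_div divff ?mul1r.
  by move=> e; move: qj'; rewrite e ltxx.
have Hbe : be = dotv al W by rewrite (Hal w cw aw).
have Hal1 : forall i : 'I_N, dotv c (pt i) = d -> dotv a (pt i) = b -> dotv al (pt i - W) = 0.
  by move=> i ci ai; rewrite dotvBr (Hal i ci ai) -Hbe subrr.
have eq1 : forall j, J j -> Rq W al j = Rq W al i0.
  move=> j Jj; apply/eqP; rewrite eq_le key //=.
  have := key (- al) (fun i ci ai => ltac:(by rewrite dotvNl Hal1 // oppr0)) j Jj.
  by rewrite !Rq_opp lerN2.
by rewrite Hbe !rat_Rq !eq1.
Qed.

Lemma rat_lin al1 al2 be1 be2 t i :
  rat (al1 + t *: al2) (be1 + t * be2) i = rat al1 be1 i + t * rat al2 be2 i.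
Proof. rewrite /rat dotvDl dotvZl mulrA -mulrDl; congr (_ / _); ring. Qed.

Lemma rat_le0 al be i : dotv al (pt i) <= be -> dotv c (pt i) < d -> rat al be i <= 0.
Proof. move=> H1 H2; rewrite /rat ler_pdivrMr ?subr_gt0 // mul0r subr_le0 //. Qed.

Lemma dotv0l (x : 'rV[R]_n) : dotv 0 x = 0.
Proof. by rewrite -(scale0r 0) dotvZl mul0r. Qed.

Hypothesis Hoff : exists i : 'I_N, dotv c (pt i) < d.

Lemma main_V : exists k h, LF k h /\ forall g h0, LF g h0 -> seteq (hface V g h0) (hface V k h).
Proof.
have [istar [Ii Hmax]] := @ex_max R _ (fun i : 'I_N => dotv c (pt i) < d) (rat a b) Hoff.
set s := rat a b istar.
have [k [h' [Hk Hspec]]] := @tilt 0 0 a b s (fun i => ltac:(by rewrite dotv0l))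
  (fun i ci _ => Ha ci) (fun i ci _ => Hmax i ci).
have LFk : LF k h'.
  split => //.
  - move=> i ci; split.
      by move/Hspec => [[_ [_ ->]]|[ci' _]] //; move: ci'; rewrite ci ltxx.
    by move=> ai; apply/Hspec; left; rewrite dotv0l.
  - by exists istar; split => //; apply/Hspec; right; rewrite dotv0l.
exists k, h'; split => // g h0 LFg.
have [Hg HgB [u0 [cu0 gu0]]] := LFg.
have C1 : forall i : 'I_N, dotv c (pt i) < d -> rat a b i <= rat a b u0.
  move=> i1 ci1; rewrite leNgt; apply/negP => lt.
  have Hp : forall i : 'I_N, dotv c (pt i) < d -> rat g h0 i <= rat g h0 u0.
    by move=> i ci; rewrite {2}/rat gu0 subrr mul0r rat_le0.
  have [tau [j [tau0 cj qj Hmax2 Heq]]] := @breakpoint R _ (fun i : 'I_N => dotv c (pt i) < d)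
     (rat g h0) (rat a b) u0 cu0 Hp (ex_intro _ i1 (conj ci1 lt)).
  have [k2 [h2 [Hk2 Hspec2]]] := @tilt 0 0 (g + tau *: a) (h0 + tau * b)
     (rat g h0 u0 + tau * rat a b u0) (fun i => ltac:(by rewrite dotv0l))
     (fun i ci _ => ltac:(by rewrite dotvDl dotvZl lerD // ler_wpM2l // Ha))
     (fun i ci _ => ltac:(by rewrite rat_lin; apply: Hmax2)).
  have LF2 : LF k2 h2.
    split => //.
    - move=> i ci; split.
        move/Hspec2 => [[_ [_ e]]|[ci' _]]; last by move: ci'; rewrite ci ltxx.
        move: e; rewrite dotvDl dotvZl => e.
        have g1 := Hg i; have a1 := Ha ci.
        have t1 : 0 <= tau * (b - dotv a (pt i)) by rewrite mulr_ge0 // subr_ge0.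
        have ge : dotv g (pt i) = h0 by rewrite mulrBr in t1; lra.
        by apply/(HgB i ci).
      move=> ai; apply/Hspec2; left; rewrite dotv0l; split => //; split => //.
      by rewrite dotvDl dotvZl ai (iffRL (HgB i ci) ai).
    - by exists u0; split => //; apply/Hspec2; right; rewrite dotv0l rat_lin.
  have k2u0 : dotv k2 (pt u0) = h2.
    by apply/Hspec2; right; rewrite dotv0l rat_lin.
  have k2j : dotv k2 (pt j) = h2.
    by apply/Hspec2; right; rewrite dotv0l rat_lin Heq.
  have e := @Kp k2 h2 LF2 u0 j cu0 k2u0 cj k2j a b (fun i _ ai => ai).
  by move: qj; rewrite e ltxx.
have [_ LFkB _] := LFk.
have es : s = rat a b u0 by apply/eqP; rewrite eq_le C1 // Hmax.
have ku0 : dotv k (pt u0) = h'.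
  by apply/Hspec; right; rewrite dotv0l es.
have pw : forall i : 'I_N, dotv g (pt i) = h0 <-> dotv k (pt i) = h'.
  move=> i; have := Hc i; rewrite le_eqVlt => /orP [/eqP ci|ci].
    by split => [/(HgB i ci) /(iffRL (LFkB i ci))|/(LFkB i ci) /(iffRL (HgB i ci))].
  split.
    move=> gi; apply/Hspec; right; rewrite dotv0l; split => //; split => //.
    by rewrite es; apply: (Kp LFg) => //.
  move/Hspec => [[ci' _]|[_ [_ ri]]]; first by move: ci; rewrite ci' ltxx.
  have := @Kp k h' LFk i u0 ci (iffRL (Hspec i) (or_intror (conj ci (conj (dotv0l _) ri))))
    cu0 ku0 g h0 (fun i ci ai => iffRL (HgB i ci) ai).
  rewrite {2}/rat gu0 subrr mul0r /rat => /eqP; rewrite mulf_eq0 invr_eq0 subr_eq0.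
  case/orP => [/eqP //|]; rewrite subr_eq0 => /eqP e.
  by move: ci; rewrite -e ltxx.
move=> x; split.
- move=> [[lam [l0 [s1 ex]]] gx]; split; first by exists lam.
  rewrite ex in gx *.
  apply/(conv_eq l0 s1 (fun i _ => Hk i)) => i li; apply/pw.
  by move: i li; apply/(conv_eq l0 s1 (fun i _ => Hg i)).
- move=> [[lam [l0 [s1 ex]]] kx]; split; first by exists lam.
  rewrite ex in kx *.
  apply/(conv_eq l0 s1 (fun i _ => Hg i)) => i li; apply/pw.
  by move: i li; apply/(conv_eq l0 s1 (fun i _ => Hk i)).
Qed.
End Main.


Unset Implicit Arguments.

Theorem mainTheorem4 (R : realFieldType) (n : nat) (V : seq 'rV[R]_n)
    (B F : pset R n) :
  treetope (conv V) B ->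
  is_face B F -> (exists x, F x) ->
  exists F' : pset R n,
    [/\ is_face (conv V) F', ~ seteq F' F, seteq (psetI F' B) F &
      forall G : pset R n, is_face (conv V) G -> ~ seteq G F ->
        seteq (psetI G B) F -> seteq G F'].
Proof.
move=> [[HBface [kd [HP HB]]] Htree] [a [b [HaB EF]]] [x0 Fx0].
have [c [d [Hc EB]]] := face_hface HBface.
have Ha : forall i : 'I_(size V), dotv c V`_i = d -> dotv a V`_i <= b.
  by move=> i ci; apply: HaB; apply/EB; split; [exact: conv_pt|].
have EF0 : seteq F (F0 V c a d b).
  move=> x; rewrite (EF x); split.
    by case=> /EB Bx ax; split.
  by case=> /EB Bx ax; split.
have HF' : exists i : 'I_(size V), (dotv c V`_i == d) && (dotv a V`_i == b).
  have [[[lam [l0 [s1 ex]]] cx] ax] := iffLR (EF0 x0) Fx0.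
  rewrite ex in cx ax.
  have Hcd := iffLR (conv_eq l0 s1 (fun i _ => Hc i)) cx.
  have Had := iffLR (conv_eq l0 s1 (fun i li => Ha i (Hcd i li))) ax.
  have [i li] := sum1_pos l0 s1.
  by exists i; rewrite Hcd // Had // !eqxx.
have Htree' : forall T, is_face (conv V) T -> at_most_one_point (psetI T (B0 V c d)) -> dim_le T 1.
  move=> T HT H1; apply: Htree => // x y [Tx Bx] [Ty By].
  by apply: H1; split => //; apply/EB.
have Hoff : exists i : 'I_(size V), dotv c V`_i < d.
  case: (pickP (fun i : 'I_(size V) => dotv c V`_i < d)) => [i Hi|H]; first by exists i.
  exfalso.
  have allB : forall x, conv V x -> B x.
    move=> x Cx; apply/EB; split => //.
    case: Cx => lam [l0 [s1 ex]]; rewrite ex.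
    apply/(conv_eq l0 s1 (fun i _ => Hc i)) => i _.
    by have := Hc i; rewrite le_eqVlt H orbF => /eqP.
  case: HP => _ [_ [s [Ss rs]]].
  case: HB => _ [HBk _].
  have := HBk s (fun x xs => allB x (Ss x xs)).
  by rewrite rs ltnn.
have [k [h [LFk Huniq]]] := main_V Hc Ha HF' Htree' Hoff.
exists (hface V k h); split.
- exact: LF_face LFk.
- move=> E; apply: (LF_neq LFk) => x; rewrite (E x); exact: EF0.
- move=> x; rewrite (EF0 x) -(LF_meet Hc Ha LFk x); split; case=> H1 H2; split => //; by apply/EB.
- move=> G HG NG EG.
  have E1 : seteq (psetI G (B0 V c d)) (F0 V c a d b).
    move=> x; rewrite -(EF0 x) -(EG x); split; case=> H1 H2; split => //; by apply/EB.
  have E2 : ~ seteq G (F0 V c a d b).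
    move=> E; apply: NG => x; rewrite (E x); symmetry; exact: EF0.
  have [g [h0 [LFg EGg]]] := face_LF Hc HG E1 E2.
  move=> x; rewrite (EGg x); exact: Huniq LFg x.
Qed.
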